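(* Let $\Sigma$ be a finite predictive theory and $A \Rightarrow B$ a predictive formula. Then the procedure PseudoLinClosure executed with arguments $\Sigma$, $A$ and $\mathit{Max} = u(B)$ terminates after finitely many steps, and for its returned value $M$ we have $\Sigma \vdash A \Rightarrow B$ if and only if $B \subseteq M$.
   Context: $Y$ is a non-empty finite set of attributes and $\mathcal{T}_Y = \{y^i \mid y \in Y, i \in \mathbb{Z}\}$; $M + j = \{y^{i+j} \mid y^i \in M\}$. A formula is $A \Rightarrow B$ with $A,B$ finite subsets of $\mathcal{T}_Y$; a theory is a set of formulas. For finite non-empty $M$, $l(M) = \min\{i \mid y^i \in M\}$, $u(M) = \max\{i \mid y^i \in M\}$. $A \Rightarrow B$ is predictive if $A,B \neq \emptyset$ and $i \le j$ for all $x^i \in A$, $y^j \in B$; a theory is predictive if all its formulas are. Deduction rules (for finite $A,B,C,D$, $i \in \mathbb{Z}$): (Ax) infer $A \cup B \Rightarrow A$; (Cut) from $A \Rightarrow B$ and $B \cup C \Rightarrow D$ infer $A \cup C \Rightarrow D$; (Shf) from $A \Rightarrow B$ infer $A+i \Rightarrow B+i$; $\Sigma \vdash A \Rightarrow B$ means a finite sequence ending with $A \Rightarrow B$ exists whose members are in $\Sigma$ or follow from earlier members by these rules. Procedure PseudoLinClosure$(\Sigma, A, \mathit{Max})$: for every $E \Rightarrow F \in \Sigma$ and every integer $i$ with $l(A)-l(E) \le i \le \mathit{Max}-l(F)$, set $\mathit{count}[E \Rightarrow F, i] := |E|$ and, for every $y^j \in E$, add the pair $\langle E \Rightarrow F,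 i\rangle$ to the list $\mathit{list}[y^{i+j}]$ (all lists initially empty). Set $M := A$ and $\mathit{update} := A$. While $\mathit{update} \neq \emptyset$: choose $y^i \in \mathit{update}$, remove it from $\mathit{update}$, and for every $\langle E \Rightarrow F, j\rangle \in \mathit{list}[y^i]$ decrement $\mathit{count}[E \Rightarrow F, j]$ by one; if it becomes $0$, put $\mathit{new} := (F+j) \setminus M$, $M := M \cup \mathit{new}$, $\mathit{update} := \mathit{update} \cup \mathit{new}$. Finally return $M$. *)

(* Defs.v *)
From HB Require Import structures.
From mathcomp Require Import all_boot all_order all_algebra finmap.
From Stdlib Require Import Relations.
Set Implicit Arguments. Unset Strict Implicit. Unset Printing Implicit Defensive.
Import Order.TTheory GRing.Theory Num.Theory.
Local Open Scope fset_scope.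
Local Open Scope ring_scope.

Section Defs.
Variable Y : finType.

(* temporal attribute y^i is the pair (y, i) *)
Definition tattr := (Y * int)%type.

Definition formula := ({fset tattr} * {fset tattr})%type.

Definition shift (M : {fset tattr}) (j : int) : {fset tattr} :=
  [fset (x.1, x.2 + j) | x in M].

(* l(M), u(M) (only meaningful for non-empty M) *)
Definition lowM (M : {fset tattr}) : int :=
  let s := [seq x.2 | x <- enum_fset M] in foldr Num.min (head 0 s) s.
Definition uppM (M : {fset tattr}) : int :=
  let s := [seq x.2 | x <- enum_fset M] in foldr Num.max (head 0 s) s.

Definition predictive (f : formula) : Prop :=
  f.1 != fset0 /\ f.2 != fset0 /\
  forall x y, x \in f.1 -> y \in f.2 -> x.2 <= y.2.

Definition predictive_theory (S : {fset formula}) : Prop :=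
  forall f, f \in S -> predictive f.

Inductive derivable (S : {fset formula}) : formula -> Prop :=
| der_hyp f : f \in S -> derivable S f
| der_ax (A B : {fset tattr}) : derivable S (A `|` B, A)
| der_cut (A B C D : {fset tattr}) :
    derivable S (A, B) -> derivable S (B `|` C, D) -> derivable S (A `|` C, D)
| der_shf (A B : {fset tattr}) (i : int) :
    derivable S (A, B) -> derivable S (shift A i, shift B i).

(* keys of count / entries of lists: pairs <E => F, i> *)
Definition key := (formula * int)%type.

Definition irange (lo hi : int) : seq int :=
  [seq i <- mkseq (fun k => lo + k%:Z) (absz (hi - lo + 1)) | i <= hi].

Definition keys (S : {fset formula}) (A : {fset tattr}) (Max : int) : {fset key} :=
  \bigcup_(f <- S) [fset (f, i) | i in irange (lowM A - lowM f.1) (Max - lowM f.2)].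

Definition count0 (S : {fset formula}) (A : {fset tattr}) (Max : int)
  (p : key) : int :=
  if p \in keys S A Max then (#|` p.1.1 |)%:Z else 0.

(* list[z]: the pairs <E => F, i> added to the list of z, i.e. those with
   z = y^(i+j) for some y^j in E *)
Definition plist (S : {fset formula}) (A : {fset tattr}) (Max : int)
  (z : tattr) : {fset key} :=
  [fset p in keys S A Max | z \in shift p.1.1 p.2].

(* State of the while loop.  [pend] holds the entries of list[y^i] not yet
   processed for the currently chosen element y^i. *)
Record pstate := PState {
  st_count : key -> int;
  st_M : {fset tattr};
  st_update : {fset tattr};
  st_pend : {fset key}
}.

Definition init_state (S : {fset formula}) (A : {fset tattr}) (Max : int) :=
  PState (count0 S A Max) A A fset0.

(* one elementary step of the loop (nondeterministic choices) *)
Inductive pstep (S : {fset formula}) (A : {fset tattr}) (Max : int) :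
  pstate -> pstate -> Prop :=
| step_choose (c : key -> int) (M U : {fset tattr}) (z : tattr) :
    z \in U ->
    pstep S A Max (PState c M U fset0)
                  (PState c M (U `\ z) (plist S A Max z))
| step_process (c : key -> int) (M U : {fset tattr}) (P : {fset key}) (p : key) :
    p \in P ->
    let c' := fun q => if q == p then c p - 1 else c q in
    let new := if c p - 1 == 0 then shift p.1.2 p.2 `\` M else fset0 in
    pstep S A Max (PState c M U P)
                  (PState c' (M `|` new) (U `|` new) (P `\ p)).

Definition final_state (s : pstate) : Prop :=
  st_update s = fset0 /\ st_pend s = fset0.

End Defs.

(* Main.v *)
Require Import Defs.
From HB Require Import structures.
From mathcomp Require Import all_boot all_order all_algebra finmap zify.
From Stdlib Require Import Relations.
Set Implicit Arguments. Unset Strict Implicit. Unset Printing Implicit Defensive.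
Import Order.TTheory GRing.Theory Num.Theory.
Local Open Scope fset_scope.
Local Open Scope ring_scope.

Lemma foldr_min_le (s : seq int) a x : x \in a :: s -> foldr Num.min a s <= x.
Proof.
elim: s x => [|y s IH] x /=; first by rewrite inE => /eqP ->.
rewrite !inE ge_min => /or3P[/eqP->|/eqP->|xs].
- by rewrite IH ?orbT // inE eqxx.
- by rewrite lexx.
- by rewrite IH ?orbT // inE xs orbT.
Qed.

Lemma foldr_max_ge (s : seq int) a x : x \in a :: s -> x <= foldr Num.max a s.
Proof.
elim: s x => [|y s IH] x /=; first by rewrite inE => /eqP ->.
rewrite !inE le_max => /or3P[/eqP->|/eqP->|xs].
- by rewrite IH ?orbT // inE eqxx.
- by rewrite lexx.
- by rewrite IH ?orbT // inE xs orbT.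
Qed.

Lemma foldr_min_in (s : seq int) a : foldr Num.min a s \in a :: s.
Proof.
elim: s => [|y s IH] /=; first by rewrite inE.
rewrite minEle; case: ifP => _; first by rewrite !inE eqxx orbT.
by move: IH; rewrite !inE => /orP[->|->]; rewrite ?orbT.
Qed.

Section L.
Variable Y : finType.
Implicit Types (M E F : {fset tattr Y}).

Lemma lowM_le M x : x \in M -> lowM M <= x.2.
Proof.
move=> xM; rewrite /lowM; apply: foldr_min_le; rewrite inE; apply/orP; right.
by apply/mapP; exists x.
Qed.

Lemma uppM_ge M x : x \in M -> x.2 <= uppM M.
Proof.
move=> xM; rewrite /uppM; apply: foldr_max_ge; rewrite inE; apply/orP; right.
by apply/mapP; exists x.
Qed.

Lemma lowM_in M : M != fset0 -> exists2 x, x \in M & x.2 = lowM M.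
Proof.
move=> M0; rewrite /lowM.
set s := [seq x.2 | x <- enum_fset M].
have : foldr Num.min (head 0 s) s \in s.
  have := foldr_min_in s (head 0 s); rewrite inE => /orP[/eqP->|//].
  have [x0 x0M] := fset0Pn _ M0.
  have : x0.2 \in s by apply/mapP; exists x0.
  by case: s => [|y s] //= _; rewrite inE eqxx.
by move=> /mapP[x xM ->]; exists x.
Qed.
End L.

Lemma in_irange (lo hi i : int) : (i \in irange lo hi) = (lo <= i <= hi).
Proof.
rewrite /irange mem_filter /mkseq; apply/idP/idP.
  move=> /andP[ih /mapP[k _ ik]]; rewrite ik in ih *.
  have : (0 <= k%:Z) by []. move: ih; rewrite -ik => ih. lia.
move=> /andP[h1 h2]; rewrite h2 /=; apply/mapP; exists (absz (i - lo)).
  rewrite mem_iota add0n; lia.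
lia.
Qed.

Section L2.
Variable Y : finType.
Implicit Types (M C D E F : {fset tattr Y}).

Lemma in_shift M j x : (x \in shift M j) = ((x.1, x.2 - j) \in M).
Proof.
apply/imfsetP/idP => [[y yM ->]|xM] /=.
  by rewrite addrK -surjective_pairing.
by exists (x.1, x.2 - j) => //=; rewrite subrK -surjective_pairing.
Qed.

Lemma card_shift M j : #|` shift M j| = #|` M|.
Proof.
rewrite card_imfset //=.
by move=> [a b] [c d] /= [-> /addIr ->].
Qed.

Lemma in_keys S A Max (p : key Y) :
  (p \in keys S A Max) =
  (p.1 \in S) && (p.2 \in irange (lowM A - lowM p.1.1) (Max - lowM p.1.2)).
Proof.
apply/bigfcupP/andP => [[f /andP[fS _] /imfsetP[i iin ->]]|[pS pin]] /=.
  by [].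
by exists p.1; [rewrite pS | apply/imfsetP; exists p.2 => //; case: p {pS pin}].
Qed.

Variable S : {fset formula Y}.

Lemma der_eq C D C' D' : derivable S (C, D) -> C = C' -> D = D' -> derivable S (C', D').
Proof. by move=> h <- <-. Qed.

Lemma der_proj C D D' : derivable S (C, D) -> D' `<=` D -> derivable S (C, D').
Proof.
move=> h sub.
have h2 : derivable S (D `|` fset0, D').
  by apply: der_eq (der_ax S D' D) _ _ => //; rewrite fsetU0; apply/fsetUidPr.
by apply: der_eq (der_cut h h2) _ _; rewrite ?fsetU0.
Qed.

Lemma der_trans C D E : derivable S (C, D) -> derivable S (D, E) -> derivable S (C, E).
Proof.
move=> h1 h2.
have h3 : derivable S (D `|` fset0, E) by rewrite fsetU0.
by apply: der_eq (der_cut h1 h3) _ _; rewrite ?fsetU0.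
Qed.

Lemma der_union C D E : derivable S (C, D) -> derivable S (C, E) -> derivable S (C, D `|` E).
Proof.
move=> h1 h2.
have h3 : derivable S (E `|` D, D `|` E).
  by apply: der_eq (der_ax S (D `|` E) fset0) _ _; rewrite ?fsetU0 // fsetUC.
have h4 := der_cut h2 h3.
have h5 : derivable S (D `|` C, D `|` E) by rewrite fsetUC.
by apply: der_eq (der_cut h1 h5) _ _; rewrite ?fsetUid.
Qed.

Definition sat (N : tattr Y -> bool) (f : formula Y) :=
  forall j : int, (forall x, x \in f.1 -> N (x.1, x.2 + j)) ->
  forall x, x \in f.2 -> N (x.1, x.2 + j).

Lemma sound N f : (forall g, g \in S -> sat N g) -> derivable S f -> sat N f.
Proof.
move=> hS; elim => {f}.
- by move=> f fS; apply: hS.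
- move=> C D j h x xC; apply: h; by rewrite inE xC.
- move=> C D E F _ IH1 _ IH2 j h x xF; apply: (IH2 j) => // y.
  rewrite inE => /orP[yD|yE]; last by apply: h; rewrite inE yE orbT.
  by apply: (IH1 j) => // z zC; apply: h; rewrite inE zC.
- move=> C D i _ IH j h x /=; rewrite in_shift => xD.
  have := IH (i + j) _ _ xD.
  have -> : x.2 - i + (i + j) = x.2 + j by lia.
  apply => y yC.
  have := h (y.1, y.2 + i); rewrite in_shift /= addrK -surjective_pairing => /(_ yC).
  by have -> : y.2 + i + j = y.2 + (i + j) by lia.
Qed.
End L2.

Lemma ineq1 (m u v j : int) : m < u -> u - j <= v -> j <= m - v -> False.
Proof. lia. Qed.

Section Main.
Variable Y : finType.
Variables (S : {fset formula Y}) (A B : {fset tattr Y}).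
Hypothesis HS : predictive_theory S.
Hypothesis HAB : predictive (A, B).
Local Notation Max := (uppM B).
Local Notation K := (keys S A Max).

Definition cset (s : pstate Y) (p : key Y) : {fset tattr Y} :=
  [fset x in shift p.1.1 p.2 | (x \notin st_M s) || (x \in st_update s)].

Record Inv (s : pstate Y) : Prop := {
  i_pend : st_pend s `<=` K;
  i_UM : st_update s `<=` st_M s;
  i_AM : A `<=` st_M s;
  i_der : derivable S (A, st_M s);
  i_cnt : forall p, p \in K ->
     st_count s p = (#|` cset s p|)%:Z + (p \in st_pend s : nat)%:Z;
  i_zero : forall p, p \in K -> st_count s p = 0 -> shift p.1.2 p.2 `<=` st_M s;
  i_low : forall x, x \in st_M s -> lowM A <= x.2 }.

Lemma keyS p : p \in K -> p.1 \in S.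
Proof. by rewrite in_keys => /andP[]. Qed.

Lemma inv_init : Inv (init_state S A Max).
Proof.
split => //=.
- by apply: der_eq (der_ax S A A) _ _; rewrite ?fsetUid.
- move=> p pK; rewrite /count0 pK addr0.
  congr (Posz _); rewrite -(card_shift p.1.1 p.2); congr (#|` _|).
  apply/fsetP => x; rewrite /cset !inE /=.
  by case: (x \in shift _ _) => //=; case: (x \in A).
- move=> p pK; rewrite /count0 pK => /eqP; rewrite eqz_nat cardfs_eq0.
  by have [+ _] := HS (keyS pK) => /negPf ->.
- by move=> x; apply: lowM_le.
Qed.

Lemma inv_step s s' : pstep S A Max s s' -> Inv s -> Inv s'.
Proof.
case => [c M U z zU | c M U P p pP] /= I.
- have zM : z \in M by apply: (fsubsetP (i_UM I)).
  split => /=.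
  + by apply/fsubsetP => q; rewrite inE => /andP[].
  + apply/fsubsetP => x; rewrite inE => /andP[_]; apply: (fsubsetP (i_UM I)).
  + exact: (i_AM I).
  + exact: (i_der I).
  + move=> q qK; have := i_cnt I qK; rewrite /= addr0 => ->.
    rewrite (cardfsD1 z) PoszD addrC; congr (_ + _).
      congr (Posz _); congr (#|` _|); apply/fsetP => x; rewrite /cset !inE /=.
      by case: (eqVneq x z) => [->|_] /=; rewrite ?zM ?andbF.
    by rewrite /cset !inE /= qK zU orbT andbT.
  + exact: (i_zero I).
  + exact: (i_low I).
- have pK : p \in K by apply: (fsubsetP (i_pend I)).
  set new := if c p - 1 == 0 then shift p.1.2 p.2 `\` M else fset0.
  have newM : forall x, x \in new -> x \notin M.
    by move=> x; rewrite /new; case: ifP => _; rewrite ?inE // => /andP[].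
  have newF : new `<=` shift p.1.2 p.2.
    by rewrite /new; case: ifP => _; rewrite ?fsubDset ?fsubsetUr // fsub0set.
  have csetE : forall q, cset (PState (fun q => if q == p then c p - 1 else c q)
     (M `|` new) (U `|` new) (P `\ p)) q = cset (PState c M U P) q.
    move=> q; apply/fsetP => x; rewrite /cset !inE /=.
    case xn: (x \in new); last by rewrite !orbF.
    by rewrite (negPf (newM _ xn)) /= orbT.
  split => /=.
  + by apply/fsubsetP => q; rewrite inE => /andP[_]; apply: (fsubsetP (i_pend I)).
  + by apply: fsetSU; exact: (i_UM I).
  + by apply: fsubsetU; rewrite (i_AM I).
  + rewrite /new; case: ifP => [/eqP c0|_]; last by rewrite fsetU0; exact: (i_der I).
    have cp := i_cnt I pK; rewrite /= pP /= in cp.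
    have e0 : #|` cset (PState c M U P) p| = 0%N.
      by move: c0; rewrite cp addrK => /eqP; rewrite eqz_nat => /eqP.
    have EM : shift p.1.1 p.2 `<=` M.
      apply/fsubsetP => x xE; apply: contraT => xM.
      have : x \in cset (PState c M U P) p by rewrite /cset !inE /= xE xM.
      by rewrite (cardfs0_eq e0) in_fset0.
    have hF : derivable S (A, shift p.1.2 p.2).
      apply: der_trans (der_proj (i_der I) EM) _.
      apply: der_shf; have := der_hyp (keyS pK); by case: (p.1).
    apply: der_proj (der_union (i_der I) hF) _.
    by apply: fsetUS; apply: fsubsetDl.
  + move=> q qK; rewrite csetE /= in_fsetD1; have := i_cnt I qK; rewrite /= => cq.
    case: (eqVneq q p) => [qp|qp] /=; last by rewrite cq.
    by subst q; rewrite cq pP /= addrK addr0.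
  + move=> q qK; case: (eqVneq q p) => [->|qp] /= c0.
      apply/fsubsetP => x xF; rewrite inE; case xM: (x \in M) => //=.
      by rewrite /new c0 eqxx !inE xM xF.
    by apply: fsubset_trans (fsubsetUl _ _); apply: (i_zero I).
  + move=> x; rewrite inE => /orP[xM|xn]; first exact: (i_low I).
    have := fsubsetP newF x xn; rewrite in_shift => xF.
    have [_ [_ HE]] := HS (keyS pK).
    have [|e0 e0E e0l] := @lowM_in _ p.1.1.
      by have [] := HS (keyS pK).
    have := HE _ _ e0E xF; rewrite /= e0l.
    have := pK; rewrite in_keys => /andP[_]; rewrite in_irange => /andP[h1 _].
    lia.
Qed.

Definition W : {fset tattr Y} := A `|` \bigcup_(q <- K) shift q.1.2 q.2.

Definition meas (s : pstate Y) : nat :=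
  (#|` W `\` st_M s| * (#|` K|).+2 + #|` st_update s| * (#|` K|).+1 + #|` st_pend s|)%N.

Lemma meas_step s s' : pstep S A Max s s' -> st_pend s `<=` K ->
  (meas s' < meas s)%N /\ st_pend s' `<=` K.
Proof.
case => [c M U z zU | c M U P p pP] /= PK.
- have PlK : plist S A Max z `<=` K.
    by apply/fsubsetP => q; rewrite inE => /andP[].
  split => //; rewrite /meas /=.
  have h1 := cardfsD1 z U; rewrite zU in h1.
  have h2 := fsubset_leq_card PlK.
  simpl in h1; rewrite h1 mulSn addn0 -!addnA ltn_add2l addnC ltn_add2r ltnS h2 //.
- have pK : p \in K by apply: (fsubsetP PK).
  set new := if c p - 1 == 0 then shift p.1.2 p.2 `\` M else fset0.
  have newM : forall x, x \in new -> x \notin M.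
    by move=> x; rewrite /new; case: ifP => _; rewrite ?inE // => /andP[].
  have newF : new `<=` shift p.1.2 p.2.
    by rewrite /new; case: ifP => _; rewrite ?fsubDset ?fsubsetUr // fsub0set.
  have newW : new `<=` W `\` M.
    apply/fsubsetP => x xn; rewrite inE (newM _ xn) /= /W inE; apply/orP; right.
    by apply: (fsubsetP (bigfcup_sup _ _ _)) => //; [exact: pK | apply: (fsubsetP newF)].
  split; last by apply: fsubset_trans (fsubD1set _ _) PK.
  rewrite /meas /=.
  have h1 := cardfsD1 p P; rewrite pP in h1.
  have h2 : W `\` (M `|` new) = (W `\` M) `\` new by rewrite fsetDDl.
  have h3 := cardfsDS newW.
  have h4 := fsubset_leq_card newW.
  have h5 : (#|` U `|` new| <= #|` U| + #|` new|)%N by rewrite cardfsU leq_subr.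
  rewrite h2 h3.
  set D := #|` W `\` M| in h4 *; set k := #|` new| in h4 h5 *.
  set U' := #|` U `|` new| in h5 *.
  set Kn := #|` K|.
  simpl in h1.
  have e1 : (U' * Kn.+1 <= #|`U| * Kn.+1 + k * Kn.+1)%N by rewrite -mulnDl leq_mul2r h5 orbT.
  have e2 : (D * Kn.+2 = (D-k) * Kn.+2 + (k + k * Kn.+1))%N by rewrite -mulnS -mulnDl subnK.
  rewrite e2 h1.
  move: e1; set a := ((D - k) * Kn.+2)%N; set b := (U' * Kn.+1)%N; set d := (k * Kn.+1)%N; set e := (#|`U| * Kn.+1)%N.
  lia.
Qed.

Lemma acc_meas n s : (meas s < n)%N -> st_pend s `<=` K ->
  Acc (fun s' s => pstep S A Max s s') s.
Proof.
elim: n s => [//|n IH] s ms PK; constructor => s' st.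
have [lt PK'] := meas_step st PK.
by apply: IH => //; apply: leq_trans lt _.
Qed.

Lemma reach_inv s : clos_refl_trans _ (pstep S A Max) (init_state S A Max) s -> Inv s.
Proof.
have : Inv (init_state S A Max) := inv_init.
move: (init_state S A Max) => s0 I0 H; move: I0.
elim: H => // [x y st|x y z _ IH1 _ IH2] Ix; [exact: inv_step st Ix | exact: IH2 (IH1 Ix)].
Qed.

Lemma complete s : Inv s -> final_state s -> derivable S (A, B) -> B `<=` st_M s.
Proof.
case: s => c M U P I [/= U0 P0]; subst U P.
have [A0 [B0 HABle]] := HAB.
have [a0 a0A a0l] := lowM_in A0.
have [b0 b0B] := fset0Pn _ B0.
have lowAMax : lowM A <= Max by rewrite -a0l; apply: le_trans (HABle _ _ a0A b0B) (uppM_ge b0B).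
pose N := fun x : tattr Y => (x \in M) || (Max < x.2).
have HN : forall g, g \in S -> sat N g.
  move=> g gS j hE f fF.
  have [E0 [F0 HEF]] := HS gS.
  have [e0 e0E e0l] := lowM_in E0.
  have [f0 f0F f0l] := lowM_in F0.
  have [jlo|jlo] := boolP (j < lowM A - lowM g.1).
    have := hE _ e0E; rewrite /N => /orP[/(i_low I)/=|/=]; rewrite e0l => hh; exfalso; move: jlo hh; rewrite -e0l; lia.
  have [jhi|jhi] := boolP (Max - lowM g.2 < j).
    apply/orP; right => /=; move: jhi (lowM_le fF); rewrite -f0l; move: (f0.2) (f.2) => u v; rewrite /= => h1 h2; have h3 : (Max - u < j)%R := h1; have h4 : (u <= v)%R := h2; lia.
  have gK : (g, j) \in K by move: jlo jhi; rewrite -!leNgt => jlo jhi; rewrite in_keys /= gS in_irange jlo jhi.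
  have EM : shift g.1 j `<=` M.
    apply/fsubsetP => x; rewrite in_shift => xE.
    have := hE _ xE; rewrite /N /= subrK -surjective_pairing => /orP[//|].
    move=> hm; exfalso; have h2 := HEF _ _ xE f0F; move: jhi; rewrite -f0l -leNgt => h3.
    exact: (ineq1 hm h2 h3).
  have c0 : c (g, j) = 0.
    have := i_cnt I gK; rewrite /= addr0 => ->; apply/eqP; rewrite eqz_nat cardfs_eq0; apply/eqP.
    apply/fsetP => x; rewrite /cset !inE /= orbF; apply/negbTE.
    by apply/negP => /andP[xE /negP]; apply; apply: (fsubsetP EM).
  have := fsubsetP (i_zero I gK c0) (f.1, f.2 + j); rewrite in_shift /= addrK -surjective_pairing.
  by move=> /(_ fF) /= hh; rewrite /N hh.
move=> /(sound HN) /(_ 0) h.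
have hA : forall x, x \in A -> N (x.1, x.2 + 0).
  by move=> x xA; rewrite /N addr0 -surjective_pairing (fsubsetP (i_AM I) _ xA).
apply/fsubsetP => b bB; have := h hA _ bB; rewrite /N /= addr0 -surjective_pairing.
case/orP => [//|] hb; exfalso; have := uppM_ge bB; by rewrite leNgt hb.
Qed.
End Main.

Unset Implicit Arguments.

Theorem theorem16 (Y : finType) (HY : (0 < #|Y|)%N)
  (S : {fset formula Y}) (A B : {fset tattr Y}) :
  predictive_theory S -> predictive (A, B) ->
  (* termination: every run of the loop from the initial state is finite *)
  Acc (fun s' s => pstep S A (uppM B) s s') (init_state S A (uppM B)) /\
  (* correctness of every returned value *)
  (forall s, clos_refl_trans _ (pstep S A (uppM B)) (init_state S A (uppM B)) s ->
     final_state s ->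
     (derivable S (A, B) <-> B `<=` st_M s)).
Proof.
move=> HS HAB; split.
  apply: (@acc_meas Y S A B (meas S A B (init_state S A (uppM B))).+1) => //.
move=> s R F; have I := @reach_inv Y S A B HS s R; split.
  exact: (complete HS HAB I F).
by move=> sub; exact: der_proj (i_der I) sub.
Qed.
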